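(* Let $G=(V,E)$ be a finite undirected unweighted simple graph and let $u\in V$. Let $\mathcal{F}$ be the set of all spanning rooted forests of $G$, let $\mathcal{F}_{uu}$ be the set of spanning rooted forests of $G$ in which $u$ is a root, and define $$\mathcal{S}_u=\{(F,v^* )\;:\;F\in\mathcal{F}_{uu},\ v^*\in T(F,u)\},$$ where $T(F,u)$ denotes the tree of $F$ rooted at $u$ (so $v^*$ ranges over the vertices of that tree). Then $|\mathcal{S}_u|=|\mathcal{F}|$.
   Context: A spanning forest of $G=(V,E)$ is an acyclic subgraph $(V,E')$ with $E'\subseteq E$ (same vertex set as $G$); each connected component is a tree. A spanning rooted forest is a spanning forest together with a choice of one root vertex in each of its trees. Two spanning rooted forests are equal iff they have the same edge set and the same set of roots. *)

(* Defs.v *)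
From mathcomp Require Import all_boot.
From mathcomp Require Export boolp.
Set Implicit Arguments. Unset Strict Implicit. Unset Printing Implicit Defensive.

(* A finite simple graph: vertex type T (a finType), adjacency e : rel T,
   assumed symmetric and irreflexive (hypotheses of the theorem). *)

Section Forests.
Variable T : finType.

Definition graph_edges (e : rel T) : {set {set T}} :=
  [set [set x; y] | x in T, y in T & e x y].

Definition eadj (F : {set {set T}}) : rel T :=
  [rel x y | (x != y) && ([set x; y] \in F)].

Definition is_cycle (F : {set {set T}}) (c : seq T) : bool :=
  (2 < size c) && ucycleb (eadj F) c.

Definition acyclic (F : {set {set T}}) : Prop :=
  forall c : seq T, ~~ is_cycle F c.

Definition spanning_forest (e : rel T) (F : {set {set T}}) : Prop :=
  F \subset graph_edges e /\ acyclic F.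

Definition spanning_rooted_forest (e : rel T)
    (p : {set {set T}} * {set T}) : Prop :=
  spanning_forest e p.1 /\
  forall v : T, #|[set r in p.2 | connect (eadj p.1) v r]| = 1.

End Forests.

(* Main.v *)
Require Import Defs.
From mathcomp Require Import all_boot boolp.
Set Implicit Arguments. Unset Strict Implicit.

Section Aux.
Variable T : finType.
Variable c : rel T.
Hypothesis csym : symmetric c.
Hypothesis ctr : transitive c.

Lemma root_uniq (R : {set T}) : (forall w, #|[set r in R | c w r]| = 1) ->
  forall w a b, a \in R -> b \in R -> c w a -> c w b -> a = b.
Proof.
move=> H w a b aR bR wa wb.
have /cards1P [x Hx] : #|[set r in R | c w r]| == 1 by rewrite H.
have : a \in [set r in R | c w r] by rewrite inE aR wa.
have : b \in [set r in R | c w r] by rewrite inE bR wb.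
by rewrite Hx !inE => /eqP -> /eqP ->.
Qed.

Lemma swap_root (R : {set T}) a b :
  (forall w, #|[set r in R | c w r]| = 1) -> a \in R -> c a b ->
  forall w, #|[set r in b |: (R :\ a) | c w r]| = 1.
Proof.
move=> H aR ab w; case: (boolP (c w a)) => wa.
  have wb : c w b := ctr wa ab.
  suff -> : [set r in b |: (R :\ a) | c w r] = [set b] by rewrite cards1.
  apply/setP => r; rewrite !inE.
  apply/idP/idP.
    case/andP => /orP [//| /andP [ra rR]] wr.
    by rewrite (root_uniq H rR aR wr wa) eqxx in ra.
  by move/eqP ->; rewrite eqxx wb.
rewrite -(H w); apply: eq_card => r; rewrite !inE.
case: (eqVneq r b) => [->|rb] /=.
  have -> : c w b = false.
    apply/negbTE/negP => wb; move/negP: wa; apply.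
    by apply: (ctr wb); rewrite csym.
  by rewrite andbF.
case: (eqVneq r a) => [->|ra] //=.
by rewrite (negbTE wa) andbF.
Qed.
End Aux.

Lemma eadj_sym (T : finType) (F : {set {set T}}) : symmetric (eadj F).
Proof. by move=> x y; rewrite /eadj /= eq_sym setUC. Qed.

Theorem lemma4p4 (T : finType) (e : rel T)
  (e_sym : symmetric e) (e_irr : irreflexive e) (u : T) :
  #|[set Sv : ({set {set T}} * {set T}) * T |
      `[< spanning_rooted_forest e Sv.1 >] && (u \in Sv.1.2) &&
      connect (eadj Sv.1.1) u Sv.2]|
  = #|[set p : {set {set T}} * {set T} | `[< spanning_rooted_forest e p >]]|.
Proof.
set A := [set Sv : ({set {set T}} * {set T}) * T | _].
pose f := fun Sv : ({set {set T}} * {set T}) * T =>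
  (Sv.1.1, Sv.2 |: (Sv.1.2 :\ u)).
have csym (F : {set {set T}}) : symmetric (connect (eadj F)) by apply/sym_connect_sym/eadj_sym.
have ctr (F : {set {set T}}) : transitive (connect (eadj F)) by move=> ? ? ?; apply: connect_trans.
have inj : {in A &, injective f}.
  move=> [[F R] v] [[F' R'] v']; rewrite !inE /f /=.
  case/andP => [/andP [/asboolP [_ H] uR] uv].
  case/andP => [/andP [/asboolP [_ H'] uR'] uv'].
  case=> EF ER; subst F'.
  have H2 := swap_root (csym F) (ctr F) H uR uv.
  have vv : v = v'.
    apply: (root_uniq H2 (w := u)) => //; first by rewrite !inE eqxx.
    by rewrite ER !inE eqxx.
  subst v'.
  have Rrec (S : {set T}) : (forall w, #|[set r in S | connect (eadj F) w r]| = 1) ->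
      u \in S -> S = u |: ((v |: (S :\ u)) :\ v).
    move=> HS uS; apply/setP => r; rewrite !inE.
    case: (eqVneq r u) => [->|ru] //=.
    case: (eqVneq r v) => [rv|rv] /=; last by [].
    subst r.
    apply/negbTE/negP => vS.
    by move: ru; rewrite (root_uniq HS (w := u) vS uS uv (connect0 _ _)) eqxx.
  by rewrite (Rrec R H uR) (Rrec R' H' uR') ER.
rewrite -(card_in_imset inj); apply: eq_card => -[F R2].
rewrite inE; apply/imsetP/idP.
  case=> [[[F' R] v]]; rewrite inE /f /=.
  case/andP => [/andP [/asboolP [sf H] uR] uv] [-> ->].
  apply/asboolP; split => //.
  move=> w /=; exact: (swap_root (csym F') (ctr F') H uR uv w).
case/asboolP => sf H.
have /cards1P [v Hv] : #|[set r in R2 | connect (eadj F) u r]| == 1 by rewrite H.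
have : v \in [set r in R2 | connect (eadj F) u r] by rewrite Hv inE.
rewrite inE => /andP [vR uv].
exists ((F, u |: (R2 :\ v)), v).
  rewrite in_set /= uv andbT; apply/andP; split; last by rewrite !in_setU1 eqxx.
  apply/asboolP; split => // w /=.
  by apply: (swap_root (csym F) (ctr F) H vR); rewrite csym.
rewrite /f /=; congr (_, _); apply/setP => r; rewrite !inE.
case: (eqVneq r v) => [->|rv] /=; first by move: vR => ->.
case: (eqVneq r u) => [ru|ru] /=; last by case: (r \in R2).
subst r; apply/negbTE/negP => uR2.
by move: rv; rewrite (root_uniq H (w := u) vR uR2 uv (connect0 _ _)) eqxx.
Qed.
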